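(* Let $A$ be a commutative ring and $L$ a nonempty set of ideals of $A$ closed under finite sums and finite intersections, with the intersection of all elements of $L$ equal to $\{0\}$. Let $B$ be a commutative ring containing $A$. Assume that each torsion $A$-module is equipped with a $B$-module structure extending its $A$-module structure, and that each $A$-linear map between torsion $A$-modules is $B$-linear. Then there is a unique $A$-algebra morphism $f:B\to A^\omega$ such that $b\,v=f(b)\,v$ for every vector $v$ of every torsion $A$-module and every $b\in B$.
   Context: $A^\omega$ is the ring whose elements are represented by families $(a_I)_{I\in L}$ of elements of $A$ such that $I\subset J\Rightarrow a_I\equiv a_J\bmod J$; two families $(a_I)$, $(b_I)$ represent the same element iff $a_I\equiv b_I\bmod I$ for all $I\in L$; operations componentwise; $A\subset A^\omega$ via constant families. An $A$-module is torsion if each vector is annihilated by some $I\in L$. A torsion $A$-module $V$ is an $A^\omega$-module via $a v:=a_I v$ whenever $I\in L$ and $Iv=0$. *)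

(* Defs.v *)
From HB Require Import structures.
From mathcomp Require Import all_boot all_order all_algebra.
Set Implicit Arguments. Unset Strict Implicit. Unset Printing Implicit Defensive.
Import GRing.Theory.
Local Open Scope ring_scope.

Definition is_ideal (A : comPzRingType) (I : A -> Prop) : Prop :=
  I 0 /\ (forall a b, I a -> I b -> I (a + b)) /\ (forall r a, I a -> I (r * a)).

Definition ideal_sum (A : comPzRingType) (I J : A -> Prop) : A -> Prop :=
  fun c => exists a b, I a /\ J b /\ c = a + b.

Definition ideal_cap (A : comPzRingType) (I J : A -> Prop) : A -> Prop :=
  fun c => I c /\ J c.

Definition good_ideal_set (A : comPzRingType) (L : (A -> Prop) -> Prop) : Prop :=
  (exists I, L I) /\
  (forall I, L I -> is_ideal I) /\
  (forall I J, L I -> L J ->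
     exists K, L K /\ forall c, K c <-> ideal_sum I J c) /\
  (forall I J, L I -> L J ->
     exists K, L K /\ forall c, K c <-> ideal_cap I J c) /\
  (forall a : A, (forall I, L I -> I a) -> a = 0).

Definition torsion (A : comPzRingType) (L : (A -> Prop) -> Prop) (V : lmodType A)
  : Prop :=
  forall v : V, exists I, L I /\ forall a, I a -> a *: v = 0.

(* Representatives of elements of A^omega: families (a_I)_{I in L}
   (values at predicates not in L are irrelevant) such that
   I ⊂ J -> a_I ≡ a_J mod J. *)
Definition omega_fam (A : comPzRingType) (L : (A -> Prop) -> Prop)
  (x : (A -> Prop) -> A) : Prop :=
  forall I J, L I -> L J -> (forall a, I a -> J a) -> J (x I - x J).

Definition omega_eq (A : comPzRingType) (L : (A -> Prop) -> Prop)
  (x y : (A -> Prop) -> A) : Prop :=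
  forall I, L I -> I (x I - y I).

Definition omega_add (A : comPzRingType) (x y : (A -> Prop) -> A) :=
  fun I => x I + y I.
Definition omega_mul (A : comPzRingType) (x y : (A -> Prop) -> A) :=
  fun I => x I * y I.
Definition omega_const (A : comPzRingType) (a : A) : (A -> Prop) -> A :=
  fun _ => a.

Definition omega_alg_morph (A B : comPzRingType) (iota : {rmorphism A -> B})
  (L : (A -> Prop) -> Prop) (f : B -> (A -> Prop) -> A) : Prop :=
  (forall b, omega_fam L (f b)) /\
  (forall b c, omega_eq L (f (b + c)) (omega_add (f b) (f c))) /\
  (forall b c, omega_eq L (f (b * c)) (omega_mul (f b) (f c))) /\
  omega_eq L (f 1) (omega_const 1) /\
  (forall a, omega_eq L (f (iota a)) (omega_const a)).

Definition B_structures (A B : comPzRingType) (iota : {rmorphism A -> B})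
  (L : (A -> Prop) -> Prop) (act : forall V : lmodType A, B -> V -> V) : Prop :=
  forall V : lmodType A, torsion L V ->
    (forall (b : B) (v w : V), act V b (v + w) = act V b v + act V b w) /\
    (forall (b c : B) (v : V), act V (b + c) v = act V b v + act V c v) /\
    (forall (b c : B) (v : V), act V (b * c) v = act V b (act V c v)) /\
    (forall v : V, act V 1 v = v) /\
    (forall (a : A) (v : V), act V (iota a) v = a *: v).

Definition linear_maps_B_linear (A B : comPzRingType)
  (L : (A -> Prop) -> Prop) (act : forall V : lmodType A, B -> V -> V) : Prop :=
  forall (V W : lmodType A) (h : {linear V -> W}), torsion L V -> torsion L W ->
    forall (b : B) (v : V), h (act V b v) = act W b (h v).

(* b v = f(b) v, where the A^omega-action on a torsion module is
   x v := x_I v whenever I in L and I v = 0. *)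
Definition acts_through (A B : comPzRingType) (L : (A -> Prop) -> Prop)
  (act : forall V : lmodType A, B -> V -> V) (f : B -> (A -> Prop) -> A) : Prop :=
  forall V : lmodType A, torsion L V ->
    forall (b : B) (v : V) (I : A -> Prop), L I -> (forall a, I a -> a *: v = 0) ->
      act V b v = f b I *: v.

(* Main.v *)
Require Import Defs.
From HB Require Import structures.
From mathcomp Require Import all_boot all_order all_algebra.
From mathcomp Require Import ring.
From Stdlib Require Import ClassicalEpsilon.
Set Implicit Arguments. Unset Strict Implicit. Unset Printing Implicit Defensive.
Import GRing.Theory.
Local Open Scope ring_scope.


Section Quot.
Variables (A : comPzRingType) (I : A -> Prop).

Definition Jq (x : A) : Prop := is_ideal I -> I x.

Lemma J0 : Jq 0. Proof. by case. Qed.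
Lemma JD a b : Jq a -> Jq b -> Jq (a + b).
Proof. by move=> ha hb hI; case: (hI) => _ [h _]; apply: h; [apply: ha|apply: hb]. Qed.
Lemma JM r a : Jq a -> Jq (r * a).
Proof. by move=> ha hI; case: (hI) => _ [_ h]; apply: h; apply: ha. Qed.
Lemma JN a : Jq a -> Jq (- a).
Proof. by move=> h; rewrite -mulN1r; apply: JM. Qed.
Lemma JB a b : Jq a -> Jq b -> Jq (a - b).
Proof. by move=> ha hb; apply: JD => //; apply: JN. Qed.
Lemma Jeq a b : a = b -> Jq a -> Jq b. Proof. by move=> ->. Qed.

Definition Jb (x : A) : bool := if excluded_middle_informative (Jq x) then true else false.
Lemma JbP x : Jb x <-> Jq x.
Proof. by rewrite /Jb; case: excluded_middle_informative. Qed.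

Lemma ex_rep (a : A) : exists y, Jb (a - y).
Proof. by exists a; apply/JbP; rewrite subrr; apply: J0. Qed.

Definition rep (a : A) : A := xchoose (ex_rep a).

Lemma rep_sub a : Jq (rep a - a).
Proof.
have /JbP h := xchooseP (ex_rep a).
by apply: (Jeq _ (JN h)); rewrite /rep; ring.
Qed.

Lemma rep_eq a b : Jq (a - b) -> rep a = rep b.
Proof.
move=> h; apply: eq_xchoose => y; apply/idP/idP => /JbP hy; apply/JbP.
  by apply: (Jeq _ (JD (JN h) hy)); ring.
by apply: (Jeq _ (JD h hy)); ring.
Qed.

Lemma rep_eqJ a b : rep a = rep b -> Jq (a - b).
Proof.
move=> e; apply: (Jeq _ (JB (rep_sub b) (rep_sub a))); rewrite e; ring.
Qed.

Lemma repK a : rep (rep a) = rep a.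
Proof. by apply: rep_eq; apply: rep_sub. Qed.

Definition Q := {x : A | rep x == x}.
HB.instance Definition _ := Choice.on Q.

Definition mk (a : A) : Q := exist _ (rep a) (introT eqP (repK a)).

Lemma valmk a : val (mk a) = rep a. Proof. by []. Qed.
Lemma mk_val (x : Q) : mk (val x) = x.
Proof. by apply: val_inj; rewrite /= (eqP (valP x)). Qed.
Lemma mk_eq a b : Jq (a - b) -> mk a = mk b.
Proof. by move=> h; apply: val_inj; rewrite /= (rep_eq h). Qed.
Lemma val_eq a (x : Q) : Jq (a - val x) -> mk a = x.
Proof. by move=> h; rewrite -(mk_val x); apply: mk_eq. Qed.

Definition qzero : Q := mk 0.
Definition qadd (x y : Q) : Q := mk (val x + val y).
Definition qopp (x : Q) : Q := mk (- val x).
Definition qscale (a : A) (x : Q) : Q := mk (a * val x).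

Lemma qaddA : associative qadd.
Proof.
move=> x y z; rewrite /qadd; apply: mk_eq; rewrite !valmk.
apply: (Jeq _ (JB (rep_sub (val y + val z)) (rep_sub (val x + val y)))); ring.
Qed.
Lemma qaddC : commutative qadd.
Proof. by move=> x y; rewrite /qadd addrC. Qed.
Lemma qadd0 : left_id qzero qadd.
Proof.
move=> x; rewrite /qadd /qzero; apply: val_eq; rewrite valmk.
apply: (Jeq _ (rep_sub 0)); ring.
Qed.
Lemma qaddN : left_inverse qzero qopp qadd.
Proof.
move=> x; rewrite /qadd /qzero; apply: mk_eq; rewrite valmk.
apply: (Jeq _ (rep_sub (- val x))); ring.
Qed.

HB.instance Definition _ := GRing.isZmodule.Build Q qaddA qaddC qadd0 qaddN.

Lemma qscaleA a b (x : Q) : qscale a (qscale b x) = qscale (a * b) x.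
Proof.
rewrite /qscale; apply: mk_eq; rewrite valmk.
apply: (Jeq _ (JM a (rep_sub (b * val x)))); ring.
Qed.
Lemma qscale1 : left_id 1 qscale.
Proof. by move=> x; rewrite /qscale mul1r mk_val. Qed.
Lemma qscaleDr : right_distributive qscale +%R.
Proof.
move=> a x y; rewrite /qscale /= /qadd; apply: mk_eq; rewrite !valmk.
apply: (Jeq _ (JB (JM a (rep_sub (val x + val y))) (JD (rep_sub (a * val x)) (rep_sub (a * val y))))); ring.
Qed.
Lemma qscaleDl (x : Q) : {morph qscale^~ x : a b / a + b}.
Proof.
move=> a b; rewrite /qscale /= /qadd; apply: mk_eq; rewrite !valmk.
apply: (Jeq _ (JN (JD (rep_sub (a * val x)) (rep_sub (b * val x))))); rewrite /=; ring.
Qed.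

HB.instance Definition _ := GRing.Zmodule_isLmodule.Build A Q qscaleA qscale1 qscaleDr qscaleDl.

Lemma valD (x y : Q) : val (x + y) = rep (val x + val y). Proof. by []. Qed.
Lemma valZ a (x : Q) : val (a *: x) = rep (a * val x). Proof. by []. Qed.
Lemma val0 : val (0 : Q) = rep 0. Proof. by []. Qed.

End Quot.


Section Hmap.
Variables (A : comPzRingType) (I : A -> Prop) (V : lmodType A) (v : V).
Hypothesis hv : forall a, Jq I a -> a *: v = 0.

Definition hmap (_ : forall a, Jq I a -> a *: v = 0) (x : Q I) : V := val x *: v.

Lemma rep_act t : rep I t *: v = t *: v.
Proof.
apply/eqP; rewrite -subr_eq0 -scalerBl; apply/eqP; apply: hv; apply: rep_sub.
Qed.

Lemma hmap_lin : linear (hmap hv).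
Proof.
move=> a x y; rewrite /hmap valD valZ rep_act scalerDl rep_act.
by rewrite scalerA.
Qed.

HB.instance Definition _ := GRing.isLinear.Build A (Q I) V *:%R (hmap hv) hmap_lin.

Lemma hmap1 : hmap hv (mk I 1) = v.
Proof. by rewrite /hmap valmk rep_act scale1r. Qed.
End Hmap.

Lemma idJ (A : comPzRingType) (I : A -> Prop) a : is_ideal I -> Jq I a -> I a.
Proof. by move=> h /(_ h). Qed.
Lemma Jid (A : comPzRingType) (I : A -> Prop) a : I a -> Jq I a.
Proof. by move=> h _. Qed.

Lemma annQ (A : comPzRingType) (I : A -> Prop) (x : Q I) a : Jq I a -> a *: x = 0.
Proof.
move=> h; change (mk I (a * val x) = mk I 0); apply: mk_eq; rewrite subr0.
by apply: (Jeq _ (JM (val x) h)); rewrite mulrC.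
Qed.

Lemma valZ1 (A : comPzRingType) (I : A -> Prop) c :
  Jq I (val (c *: mk I 1) - c).
Proof.
rewrite valZ valmk.
have h := JD (rep_sub (I:=I) (c * rep I 1)) (JM c (rep_sub (I:=I) 1)).
apply: Jeq h; ring.
Qed.


Lemma torsQ (A : comPzRingType) (L : (A -> Prop) -> Prop) (I : A -> Prop) :
  L I -> torsion L (Q I).
Proof.
move=> LI x; exists I; split=> // a ha; apply: annQ; by move=> _.
Qed.

Theorem mainTheorem12 (A B : comPzRingType) (L : (A -> Prop) -> Prop)
  (iota : {rmorphism A -> B})
  (act : forall V : lmodType A, B -> V -> V) :
  good_ideal_set L ->
  injective iota ->
  B_structures iota L act ->
  linear_maps_B_linear L act ->
  (exists f : B -> (A -> Prop) -> A,
      omega_alg_morph iota L f /\ acts_through L act f) /\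
  (forall f g : B -> (A -> Prop) -> A,
      omega_alg_morph iota L f -> acts_through L act f ->
      omega_alg_morph iota L g -> acts_through L act g ->
      forall b, omega_eq L (f b) (g b)).
Proof.
move=> [_ [Lid _]] _ Bs Blin.
have K : forall (V : lmodType A), torsion L V -> forall b (v : V) I, L I ->
    (forall a, I a -> a *: v = 0) ->
    act V b v = val (act (Q I) b (mk I 1)) *: v.
  move=> V tV b v I LI hv.
  have hv' : forall a, Jq I a -> a *: v = 0.
    by move=> a /(_ (Lid I LI)); apply: hv.
  have := Blin (Q I) V (hmap hv') (torsQ LI) tV b (mk I 1).
  move=> e; transitivity (act V b (hmap hv' (mk I 1))); first by rewrite hmap1.
  by rewrite -e.
have Kt : forall I, L I -> forall b (x : Q I),
    act (Q I) b x = val (act (Q I) b (mk I 1)) *: x.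
  move=> I LI b x; apply: K => //; first exact: torsQ.
  by move=> a ha; apply: annQ => _.
split.
  set f := fun b I => val (act (Q I) b (mk I 1)).
  exists f; split; last first.
    by move=> V tV b v I LI hv; apply: K.
  split.
    move=> b I J LI LJ sub.
    have e : act (Q J) b (mk J 1) = f b I *: mk J 1.
      apply: K => //; first exact: torsQ.
      by move=> a ha; apply: annQ => _; apply: sub.
    have h1 := valZ1 (I:=J) (f b I).
    rewrite -e in h1.
    apply: (idJ (Lid J LJ)); apply: Jeq (JN h1); rewrite /f; ring.
  have BS : forall I, L I -> _ := fun I LI => Bs _ (torsQ (L:=L) (I:=I) LI).
  split.
    move=> b c I LI; have [_ [Badd _]] := BS I LI.
    apply: (idJ (Lid I LI)); rewrite /omega_add /f Badd valD; exact: (rep_sub (I:=I)).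
  split.
    move=> b c I LI; have [_ [_ [Bmul _]]] := BS I LI.
    apply: (idJ (Lid I LI)); rewrite /omega_mul /f Bmul.
    set u := val (act (Q I) b (mk I 1)); set w := val (act (Q I) c (mk I 1)).
    have -> : act (Q I) b (act (Q I) c (mk I 1)) = (u * w) *: mk I 1.
      by rewrite {1}(Kt I LI c (mk I 1)) (Kt I LI b) scalerA.
    exact: valZ1.
  split.
    move=> I LI; have [_ [_ [_ [B1 _]]]] := BS I LI.
    apply: (idJ (Lid I LI)); rewrite /omega_const /f B1 valmk; exact: (rep_sub (I:=I)).
  move=> a I LI; have [_ [_ [_ [_ Biota]]]] := BS I LI.
  apply: (idJ (Lid I LI)); rewrite /omega_const /f Biota; exact: (valZ1 (I:=I)).
move=> f g _ hf _ hg b I LI.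
have ann : forall a, I a -> a *: mk I 1 = 0 by move=> a ha; apply: annQ => _.
have e1 := hf (Q I) (torsQ LI) b (mk I 1) I LI ann.
have e2 := hg (Q I) (torsQ LI) b (mk I 1) I LI ann.
have h1 := valZ1 (I:=I) (f b I); rewrite -e1 in h1.
have h2 := valZ1 (I:=I) (g b I); rewrite -e2 in h2.
apply: (idJ (Lid I LI)); apply: Jeq (JB h2 h1); ring.
Qed.
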